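(* Let $\mathcal M''=\bigcup_{K=1}^{\min(M,N)}\mathcal F_K^{\mathrm{an}}\times \mathcal Q_K^{\mathrm{in}}$. Then $\mathcal M''$ is identifiable: for all $(F^1,Q^1),(F^2,Q^2)\in\mathcal M''$, $F^1Q^1=F^2Q^2$ implies $(F^1,Q^1)\sim(F^2,Q^2)$.
   Context: Fix positive integers $M$ and $N$. For a positive integer $K$, $\mathcal F_K$ is the set of real $M\times K$ matrices with all entries in $[0,1]$, and $\mathcal Q_K$ is the set of real $K\times N$ matrices with entries in $[0,1]$ each of whose columns sums to $1$. $\mathcal F_K^{\mathrm{an}}$ is the set of $F\in\mathcal F_K$ such that for every $k\in\{1,\dots,K\}$ there is a row $s$ with $F_{sk}>0$ and $F_{s\ell}=0$ for all $\ell\neq k$. $\mathcal Q_K^{\mathrm{in}}$ is the set of $Q\in\mathcal Q_K$ whose rows are linearly independent. $(F^1,Q^1)\sim(F^2,Q^2)$ means $F^1,F^2$ have the same number $K$ of columns and there is a permutation $\pi$ of $\{1,\dots,K\}$ with $F^2_{sk}=F^1_{s\pi(k)}$ and $Q^2_{ki}=Q^1_{\pi(k)i}$ for all $s,k,i$. A set $\mathcal M\subseteq\bigcup_{K\ge1}\mathcal F_K\times\mathcal Q_K$ is identifiable if for all $(F^1,Q^1),(F^2,Q^2)\in\mathcal M$, $F^1Q^1=F^2Q^2$ implies $(F^1,Q^1)\sim(F^2,Q^2)$. *)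

(* Defs.v *)
From HB Require Import structures.
From mathcomp Require Import all_boot all_order all_algebra.
From mathcomp Require Import reals.
Set Implicit Arguments. Unset Strict Implicit. Unset Printing Implicit Defensive.
Import Order.TTheory GRing.Theory Num.Theory.
Local Open Scope ring_scope.

Definition inF (R : realType) (M K : nat) (F : 'M[R]_(M, K)) : Prop :=
  forall s k, 0 <= F s k <= 1.

Definition inQ (R : realType) (K N : nat) (Q : 'M[R]_(K, N)) : Prop :=
  (forall k i, 0 <= Q k i <= 1) /\ (forall i, \sum_(k < K) Q k i = 1).

Definition inFan (R : realType) (M K : nat) (F : 'M[R]_(M, K)) : Prop :=
  inF F /\ forall k : 'I_K, exists s : 'I_M,
     0 < F s k /\ forall l : 'I_K, l != k -> F s l = 0.

Definition inQin (R : realType) (K N : nat) (Q : 'M[R]_(K, N)) : Prop :=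
  inQ Q /\ row_free Q.

Definition inM2 (R : realType) (M N K : nat) (F : 'M[R]_(M, K)) (Q : 'M[R]_(K, N)) : Prop :=
  (1 <= K)%N /\ (K <= minn M N)%N /\ inFan F /\ inQin Q.

Definition equiv_pairs (R : realType) (M N K1 K2 : nat)
    (F1 : 'M[R]_(M, K1)) (Q1 : 'M[R]_(K1, N))
    (F2 : 'M[R]_(M, K2)) (Q2 : 'M[R]_(K2, N)) : Prop :=
  exists pi : 'I_K2 -> 'I_K1, bijective pi /\
    (forall s k, F2 s k = F1 s (pi k)) /\ (forall k i, Q2 k i = Q1 (pi k) i).

(* Main.v *)
Require Import Defs.
From HB Require Import structures.
From mathcomp Require Import all_boot all_order all_algebra.
From mathcomp Require Import reals.
Import Order.TTheory GRing.Theory Num.Theory.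
Local Open Scope ring_scope.

Lemma anchor (R : realType) (M N K1 K2 : nat)
    (F1 : 'M[R]_(M, K1)) (Q1 : 'M[R]_(K1, N))
    (F2 : 'M[R]_(M, K2)) (Q2 : 'M[R]_(K2, N)) :
  inF F1 -> inFan F2 -> F1 *m Q1 = F2 *m Q2 ->
  exists A : 'M[R]_(K2, K1), (forall k j, 0 <= A k j) /\ Q2 = A *m Q1.
Proof.
move=> hF1 [_ hF2] E.
have [s hs] := fin_all_exists hF2.
exists (\matrix_(k, j) ((F2 (s k) k)^-1 * F1 (s k) j)).
split.
  move=> k j; rewrite mxE; apply: mulr_ge0.
    by rewrite invr_ge0; apply: ltW; exact: (hs k).1.
  by case/andP: (hF1 (s k) j).
apply/matrixP => k i; rewrite !mxE.
have: (F1 *m Q1) (s k) i = (F2 *m Q2) (s k) i by rewrite E.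
rewrite !mxE [in RHS](bigD1 k) //= [in X in _ + X]big1 ?addr0; last first.
  by move=> l hl; rewrite (hs k).2 // mul0r.
move=> H.
under eq_bigr do rewrite mxE -mulrA.
rewrite -mulr_sumr H mulrA mulVf ?mul1r //.
by rewrite gt_eqF //; exact: (hs k).1.
Qed.

Lemma permA (R : realType) (K1 K2 : nat) (A : 'M[R]_(K2, K1)) (B : 'M[R]_(K1, K2)) :
  (forall k j, 0 <= A k j) -> (forall k j, 0 <= B k j) ->
  B *m A = 1%:M -> A *m B = 1%:M -> (forall j, \sum_k A k j = 1) ->
  exists pi : 'I_K2 -> 'I_K1, bijective pi /\
    (forall k, A k (pi k) = 1) /\ (forall k j, j != pi k -> A k j = 0).
Proof.
move=> hA hB BA AB hc.
have zBA : forall i l k, i != l -> B i k * A k l = 0.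
  move=> i l k ne.
  have : (B *m A) i l = 0 by rewrite BA mxE (negbTE ne).
  rewrite mxE => /psumr_eq0P H; apply: H => // x _; exact: mulr_ge0.
have zAB : forall i l k, i != l -> A i k * B k l = 0.
  move=> i l k ne.
  have : (A *m B) i l = 0 by rewrite AB mxE (negbTE ne).
  rewrite mxE => /psumr_eq0P H; apply: H => // x _; exact: mulr_ge0.
have ex : forall k, exists j, 0 < A k j.
  move=> k.
  have : (A *m B) k k != 0 by rewrite AB mxE eqxx oner_neq0.
  rewrite mxE => /eqP /psumr_neq0P [| j /andP [_ hj]].
    move=> x _; exact: mulr_ge0.
  exists j; rewrite lt_def hA andbT; apply/eqP => h0.
  by move: hj; rewrite h0 mul0r ltxx.
have [pi hpi] := fin_all_exists ex.
have uniq : forall k l, l != pi k -> A k l = 0.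
  move=> k l ne; apply/eqP; rewrite eq_le hA andbT; rewrite leNgt; apply/negP => pos.
  have Bz : forall i, B i k = 0.
    move=> i; case: (eqVneq i l) => [->|nil].
      have := zBA l (pi k) k ne.
      by move/eqP; rewrite mulf_eq0 (gt_eqF (hpi k)) orbF => /eqP.
    have := zBA i l k nil.
    by move/eqP; rewrite mulf_eq0 (gt_eqF pos) orbF => /eqP.
  have : (A *m B) k k = 1 by rewrite AB mxE eqxx.
  rewrite mxE big1 => [/eqP|i _]; first by rewrite eq_sym oner_eq0.
  by rewrite Bz mulr0.
have inj : injective pi.
  move=> k k' e; apply/eqP; apply/negP => /negP ne.
  have h1 : (A *m B) k' k' = 1 by rewrite AB mxE eqxx.
  rewrite mxE (bigD1 (pi k')) //= big1 ?addr0 in h1; last first.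
    by move=> i hi; rewrite uniq ?mul0r.
  have := zAB k k' (pi k) ne.
  move/eqP; rewrite mulf_eq0 (gt_eqF (hpi k)) /= e => /eqP h0.
  by move: h1; rewrite h0 mulr0 => /eqP; rewrite eq_sym oner_eq0.
have sur : forall j, exists k, pi k = j.
  move=> j.
  have : \sum_k A k j != 0 by rewrite hc oner_neq0.
  move/eqP/psumr_neq0P => [|k /andP [_ hk]]; first by move=> x _; exact: hA.
  exists k; case: (eqVneq (pi k) j) => // ne.
  by move: hk; rewrite uniq ?ltxx // eq_sym.
have [g hg] := fin_all_exists sur.
exists pi; split; first by exists g => [k|j]; [apply: inj; rewrite hg|rewrite hg].
split=> // k.
have := hc (pi k); rewrite (bigD1 k) //= big1 ?addr0 // => k' ne.
apply: uniq; apply: contra ne => /eqP e; apply/eqP; exact: inj.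
Qed.

Lemma colsum1 (R : realType) (K N : nat) (Q : 'M[R]_(K, N)) :
  inQ Q -> const_mx 1 *m Q = (const_mx 1 : 'rV[R]_N).
Proof.
move=> [_ hs]; apply/matrixP => i j; rewrite !mxE.
under eq_bigr do rewrite mxE mul1r.
exact: hs.
Qed.

Theorem mainTheorem3 (R : realType) (M N K1 K2 : nat)
    (F1 : 'M[R]_(M, K1)) (Q1 : 'M[R]_(K1, N))
    (F2 : 'M[R]_(M, K2)) (Q2 : 'M[R]_(K2, N)) :
  inM2 F1 Q1 -> inM2 F2 Q2 ->
  F1 *m Q1 = F2 *m Q2 ->
  equiv_pairs F1 Q1 F2 Q2.
Proof.
move=> [_ [_ [hF1 [hQ1 rf1]]]] [_ [_ [hF2 [hQ2 rf2]]]] E.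
have [A [hA EA]] := @anchor _ _ _ _ _ F1 Q1 F2 Q2 hF1.1 hF2 E.
have [B [hB EB]] := @anchor _ _ _ _ _ F2 Q2 F1 Q1 hF2.1 hF1 (esym E).
have BA : B *m A = 1%:M.
  apply: (row_free_inj rf1) => /=; by rewrite -mulmxA -EA -EB mul1mx.
have AB : A *m B = 1%:M.
  apply: (row_free_inj rf2) => /=; by rewrite -mulmxA -EB -EA mul1mx.
have hc : forall j, \sum_k A k j = 1.
  have : (const_mx 1 : 'rV[R]_K2) *m A = const_mx 1.
    apply: (row_free_inj rf1) => /=.
    by rewrite -mulmxA -EA !colsum1.
  move=> /matrixP H j; have := H 0 j; rewrite !mxE => <-.
  by apply: eq_bigr => k _; rewrite mxE ?mul1r.
have [pi [bij [h1 h0]]] := @permA _ _ _ A B hA hB BA AB hc.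
have inj := bij_inj bij.
have EQ : forall k i, Q2 k i = Q1 (pi k) i.
  move=> k i; rewrite EA mxE (bigD1 (pi k)) //= big1 ?addr0 ?h1 ?mul1r //.
  by move=> j hj; rewrite h0 ?mul0r.
have FA : F2 *m A = F1.
  apply: (row_free_inj rf1) => /=; by rewrite -mulmxA -EA E.
exists pi; split=> //; split=> // s k.
rewrite -FA mxE (bigD1 k) //= big1 ?addr0 ?h1 ?mulr1 //.
move=> k' hk; rewrite h0 ?mulr0 //.
by apply: contra hk => /eqP e; apply/eqP; apply: inj.
Qed.
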